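(* Let $G_1,\ldots,G_r$ be confusion graphs of $r$ users over a finite alphabet $\Sigma$, and let $x_1,\ldots,x_r\in[0,1]$ with $\sum_{i=1}^r x_i=1$. Then the rate vector $(x_1\log_2 c(G_1),\ldots,x_r\log_2 c(G_r))$ is feasible, where $c(G)$ denotes the Shannon capacity of $G$.
   Context: Setting: a sender broadcasts a word of length $n$ over a finite alphabet $\Sigma$ to $r$ users; user $i$ has a confusion graph $G_i$ on vertex set $\Sigma$, where $ab$ is an edge iff user $i$ cannot distinguish letters $a$ and $b$. Two words $x,y\in\Sigma^n$ are distinguishable by user $i$ if there is a coordinate $t$ with $x_t\neq y_t$ and $x_ty_t$ not an edge of $G_i$. A vector $(m_1,\ldots,m_r)$ of positive integers is feasible for length $n$ if there is a map $E:[m_1]\times\cdots\times[m_r]\to\Sigma^n$ such that for every $i$ and all tuples $a,a'$ with $a_i\neq a'_i$, $E(a)$ and $E(a')$ are distinguishable by user $i$. A rate vector $(R_1,\ldots,R_r)$ is feasible if there is a sequence of feasible vectors for lengths $n\to\infty$ with $R_i=\lim_{n\to\infty}\frac{\log_2 m_i^{(n)}}{n}$. The Shannon capacity of a graph $G$ is $c(G)=\lim_{n\to\infty}\alpha(G^n)^{1/n}$, where $G^n$ is the $n$-fold strong power of $G$ and $\alpha$ the independence number. *)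

(* Defs.v *)
From HB Require Import structures.
From mathcomp Require Import all_boot all_order all_algebra.
From mathcomp Require Import all_classical all_reals all_analysis.
Set Implicit Arguments. Unset Strict Implicit. Unset Printing Implicit Defensive.
Import Order.TTheory GRing.Theory Num.Theory.
Import numFieldNormedType.Exports.
Local Open Scope ring_scope.
Local Open Scope classical_set_scope.

(* A confusion graph on the alphabet S is a relation e : rel S; [e a b]
   means the user cannot distinguish letters a and b. *)
Definition simple_graph (S : finType) (e : rel S) : Prop :=
  (forall a b, e a b = e b a) /\ (forall a, ~~ e a a).

Definition word (S : finType) (n : nat) := {ffun 'I_n -> S}.

Definition distinguishable (S : finType) (e : rel S) (n : nat)
  (x y : word S n) : bool :=
  [exists t : 'I_n, (x t != y t) && ~~ e (x t) (y t)].

Definition strong_power_adj (S : finType) (e : rel S) (n : nat)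
  (x y : word S n) : bool :=
  (x != y) && [forall t : 'I_n, (x t == y t) || e (x t) (y t)].

Definition independent_set (S : finType) (e : rel S) (n : nat)
  (A : {set word S n}) : bool :=
  [forall x in A, forall y in A, ~~ strong_power_adj e x y].

Definition alpha_pow (S : finType) (e : rel S) (n : nat) : nat :=
  \max_(A : {set word S n} | independent_set e A) #|A|.

Definition shannon_capacity (R : realType) (S : finType) (e : rel S) : R :=
  lim ((fun n : nat => powR (alpha_pow e n)%:R (n%:R)^-1) @ \oo).

Definition log2 (R : realType) (x : R) : R := ln x / ln 2.

Definition feasible_vector (S : finType) (r : nat) (G : 'I_r -> rel S)
  (n : nat) (m : 'I_r -> nat) : Prop :=
  (forall i, (0 < m i)%N) /\
  exists E : (forall i : 'I_r, 'I_(m i)) -> word S n,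
    forall (i : 'I_r) (a a' : forall j : 'I_r, 'I_(m j)),
      a i != a' i -> distinguishable (G i) (E a) (E a').

Definition feasible_rate (R : realType) (S : finType) (r : nat)
  (G : 'I_r -> rel S) (Rt : 'I_r -> R) : Prop :=
  exists ms : nat -> 'I_r -> nat,
    (forall n, feasible_vector G n (ms n)) /\
    forall i : 'I_r,
      (fun n : nat => log2 ((ms n i)%:R : R) / n%:R) @ \oo --> Rt i.

(* Main.v *)
Require Import Defs.
From HB Require Import structures.
From mathcomp Require Import all_boot all_order all_algebra.
From mathcomp Require Import all_classical all_reals all_analysis.
From mathcomp Require Import ring lra zify.
Import Order.TTheory GRing.Theory Num.Theory.
Import numFieldNormedType.Exports.
Local Open Scope ring_scope.
Set Implicit Arguments. Unset Strict Implicit. Unset Printing Implicit Defensive.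

Section Comb.
Variables (S : finType) (e : rel S).

Lemma indep_set0 n : independent_set e (@finset.set0 (word S n)).
Proof. by apply/forall_inP => x; rewrite inE. Qed.

Lemma alpha_exists n : exists2 A : {set word S n}, independent_set e A & #|A| = alpha_pow e n.
Proof.
rewrite /alpha_pow.
have h : (0 < #|[pred A : {set word S n} | independent_set e A]|)%N.
  by apply/card_gt0P; exists (@finset.set0 (word S n)); rewrite inE indep_set0.
have [A HA ->] := eq_bigmax_cond (fun A : {set word S n} => #|A|) h.
by exists A => //; rewrite inE in HA.
Qed.

Lemma alpha_ge (n : nat) (A : {set word S n}) : independent_set e A -> (#|A| <= alpha_pow e n)%N.
Proof. by move=> h; apply: (@leq_bigmax_cond _ _ (fun A : {set word S n} => #|A|) A). Qed.

Lemma alpha_le n : (alpha_pow e n <= #|S| ^ n)%N.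
Proof.
have [A _ <-] := alpha_exists n.
by rewrite (leq_trans (max_card _)) // card_ffun card_ord.
Qed.

Lemma alpha_gt0 n : (0 < #|S|)%N -> (0 < alpha_pow e n)%N.
Proof.
move=> /card_gt0P [s _].
apply: leq_trans (alpha_ge (A := [set [ffun=> s]]) _); first by rewrite cards1.
apply/forall_inP => x /set1P ->; apply/forall_inP => y /set1P ->.
by rewrite /strong_power_adj eqxx.
Qed.

Lemma notadjP n (x y : word S n) :
  x != y -> ~~ strong_power_adj e x y -> distinguishable e x y.
Proof.
move=> nxy; rewrite /strong_power_adj nxy /= negb_forall => /existsP [t].
rewrite negb_or => /andP [h1 h2]; apply/existsP; exists t; by rewrite h1 h2.
Qed.

Definition concat m n (x : word S m) (y : word S n) : word S (m + n) :=
  [ffun t => match fintype.split t with inl j => x j | inr j => y j end].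

Lemma concatl m n x y (j : 'I_m) : @concat m n x y (lshift n j) = x j.
Proof. by rewrite ffunE -[lshift n j]/(unsplit (inl j)) unsplitK. Qed.
Lemma concatr m n x y (j : 'I_n) : @concat m n x y (rshift m j) = y j.
Proof. by rewrite ffunE -[rshift m j]/(unsplit (inr j)) unsplitK. Qed.

Lemma alpha_super m n : (alpha_pow e m * alpha_pow e n <= alpha_pow e (m + n))%N.
Proof.
have [A iA <-] := alpha_exists m; have [B iB <-] := alpha_exists n.
pose f := fun p : word S m * word S n => concat p.1 p.2.
have finj : injective f.
  move=> [x y] [x' y'] /= h; congr pair; apply/ffunP => j.
    by rewrite -(concatl x y) -(concatl x' y') /f /= in h *; rewrite h.
  by rewrite -(concatr x y) -(concatr x' y') /f /= in h *; rewrite h.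
rewrite -cardsX -(card_imset _ finj); apply: alpha_ge.
apply/forall_inP => w /imsetP [[x y] /setXP [xA yB] ->].
apply/forall_inP => w' /imsetP [[x' y'] /setXP [xA' yB'] ->].
rewrite /strong_power_adj negb_and negb_forall.
have [<-|nw] := eqVneq (f (x, y)) (f (x', y')); first by [].
apply/orP; right.
have [exy|nx] := eqVneq x x'.
  have ny : y != y' by apply: contra_neq nw => ->; rewrite exy.
  have := forall_inP (forall_inP iB y yB) y' yB'.
  move/(notadjP ny) => /existsP [t /andP [h1 h2]].
  by apply/existsP; exists (rshift m t); rewrite /f /= !concatr negb_or h1 h2.
have := forall_inP (forall_inP iA x xA) x' xA'.
move/(notadjP nx) => /existsP [t /andP [h1 h2]].
by apply/existsP; exists (lshift n t); rewrite /f /= !concatl negb_or h1 h2.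
Qed.

End Comb.

Local Open Scope classical_set_scope.

Definition fekL (R : realType) (b : nat -> R) : R :=
  sup [set y : R | exists2 n, (0 < n)%N & y = b n / n%:R].

Section Fekete.
Variables (R : realType) (b : nat -> R) (M : R).
Hypotheses (hb0 : forall n, 0 <= b n) (hbs : forall m n, b m + b n <= b (m + n)%N)
  (hbM : forall n, b n <= n%:R * M).

Let E := [set y : R | exists2 n, (0 < n)%N & y = b n / n%:R].
Let L := fekL b.

Lemma E_sup : has_sup E.
Proof.
split; first by exists (b 1 / 1%:R), 1%N.
exists M => y [n n0 ->].
have n0' : 0 < n%:R :> R by rewrite ltr0n.
by rewrite ler_pdivrMr // mulrC.
Qed.

Lemma fek_ub n : b n <= n%:R * L.
Proof.
case: n => [|n].
  by move: (hbM 0); rewrite !mul0r.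
have n0' : 0 < n.+1%:R :> R by rewrite ltr0n.
rewrite mulrC -ler_pdivrMr //; apply: sup_upper_bound; first exact: E_sup.
by exists n.+1.
Qed.

Lemma fek_L0 : 0 <= L.
Proof.
apply: le_trans (hb0 1) _; apply: le_trans (fek_ub 1) _; by rewrite mul1r.
Qed.

Lemma fek_mul q s p : q%:R * b p <= b (q * p + s)%N.
Proof.
elim: q => [|q IH]; first by rewrite mul0r.
rewrite mulSn -addnA; apply: le_trans (hbs _ _); rewrite mulrSr mulrDl mul1r addrC.
by rewrite lerD2l.
Qed.

Lemma fek_lb eps : 0 < eps -> exists K : nat, forall n, (K <= n)%N -> n%:R * (L - eps) <= b n.
Proof.
move=> e0.
have e20 : 0 < eps / 2 by rewrite divr_gt0.
have [y [p p0 ->] hy] := sup_adherent e20 E_sup.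
set P := p%:R : R.
have P0 : 0 < P by rewrite ltr0n.
have hbp : P * (L - eps / 2) <= b p.
  by rewrite mulrC -ler_pdivlMr // ltW.
exists (Num.truncn (2 * P * L / eps)).+1 => n hn.
have hN : 2 * P * L / eps < n%:R.
  apply: lt_le_trans (truncnS_gt _) _; by rewrite ler_nat.
have hN' : 2 * P * L < n%:R * eps by rewrite -ltr_pdivrMr.
have [hL|hL] := leP (L - eps / 2) 0.
  apply: le_trans (hb0 n); rewrite mulr_ge0_le0 //; lra.
set q := (n %/ p)%N.
have hn' : n = (q * p + n %% p)%N by rewrite /q -divn_eq.
have hq : b n >= q%:R * b p by have := fek_mul q (n %% p) p; rewrite -hn'.
have hqp : n%:R <= q%:R * P + P.
  rewrite /P -natrM -natrD ler_nat {1}hn' leq_add2l ltnW // ltn_mod //.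
have Q0 : 0 <= q%:R :> R by [].
have L0 := fek_L0.
have h1 : q%:R * (P * (L - eps / 2)) <= q%:R * b p by rewrite ler_wpM2l.
nra.
Qed.

End Fekete.

Lemma conv_trunc (R : realType) (b : nat -> R) (L x : R) :
  (forall n, 0 <= b n) -> (forall n, b n <= n%:R * L) -> 0 <= L ->
  (forall eps, 0 < eps -> exists K : nat, forall n, (K <= n)%N -> n%:R * (L - eps) <= b n) ->
  0 <= x <= 1 ->
  (fun n : nat => b (Num.truncn (x * n%:R)) / n%:R) @ \oo --> x * L.
Proof.
move=> hb0 hub L0 hlb /andP [x0 x1].
apply/cvgrPdist_le => eps e0.
have e20 : 0 < eps / 2 by rewrite divr_gt0.
have [K hK] := hlb _ e20.
exists (Num.truncn (2 * L * (K%:R + 1) / eps)).+1 => // n /= hn.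
have hN : 2 * L * (K%:R + 1) / eps < n%:R.
  apply: lt_le_trans (truncnS_gt _) _; by rewrite ler_nat.
have hN' : 2 * L * (K%:R + 1) < n%:R * eps by rewrite -ltr_pdivrMr.
have n0 : 0 < n%:R :> R.
  have : 0 <= 2 * L * (K%:R + 1) / eps by apply: divr_ge0; [apply: mulr_ge0; [apply: mulr_ge0|]|apply: ltW].
  lra.
set k := Num.truncn (x * n%:R).
have xn0 : 0 <= x * n%:R by rewrite mulr_ge0 // ltW.
have /andP [hk1 hk2] := truncn_itv xn0.
rewrite -/k in hk1 hk2.
have hbk1 := hub k.
have hbk2 : k%:R * L - k%:R * (eps / 2) - K%:R * L <= b k.
  have [kK|kK] := leqP K k.
    have := hK _ kK; have : 0 <= K%:R * L :> R by rewrite mulr_ge0.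
    lra.
  have : k%:R <= K%:R :> R by rewrite ler_nat ltnW.
  have := hb0 k; have : 0 <= k%:R :> R by [].
  nra.
have hkS : k.+1%:R = k%:R + 1 :> R by rewrite -natr1.
rewrite hkS in hk2.
have k0 : 0 <= k%:R :> R by [].
have h1 : 0 <= x * L - b k / n%:R.
  rewrite subr_ge0 ler_pdivrMr // -mulrA [L * _]mulrC mulrA.
  apply: le_trans hbk1 _; rewrite ler_wpM2r //.
have h2 : x * L - b k / n%:R <= eps.
  have -> : x * L - b k / n%:R = (x * n%:R * L - b k) / n%:R.
    by field; rewrite gt_eqF.
  rewrite ler_pdivrMr //.
  have h3 : x * n%:R * L <= (k%:R + 1) * L by rewrite ler_wpM2r // ltW.
  have h4 : k%:R <= n%:R :> R by apply: le_trans hk1 _; rewrite ler_piMl // ltW.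
  have h5 : k%:R * (eps / 2) <= n%:R * (eps / 2) by rewrite ler_wpM2r // ltW.
  nra.
by rewrite ger0_norm.
Qed.

Definition maxA (S : finType) (e : rel S) n : {set word S n} :=
  odflt (@finset.set0 _)
    [pick A : {set word S n} | independent_set e A && (#|A| == alpha_pow e n)].

Lemma maxAP (S : finType) (e : rel S) n :
  independent_set e (maxA e n) /\ #|maxA e n| = alpha_pow e n.
Proof.
rewrite /maxA; case: pickP => [A /andP [h /eqP]|h] //=.
have [A hA hc] := alpha_exists e n.
by move: (h A); rewrite hA hc eqxx.
Qed.

Definition wf (S : finType) (s0 : S) m (w : word S m) (j : nat) : S :=
  nth s0 [seq w t | t <- enum 'I_m] j.

Lemma wfE (S : finType) (s0 : S) m (w : word S m) (t : 'I_m) : wf s0 w t = w t.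
Proof. by rewrite /wf (nth_map t) ?size_enum_ord // nth_ord_enum. Qed.

Section Blocks.
Variables (r : nat) (k : 'I_r -> nat).
Definition off (i : 'I_r) := (\sum_(j < r | (j < i)%N) k j)%N.

Lemma sub_sum (P Q : pred 'I_r) : (forall l, P l -> Q l) ->
  (\sum_(l | P l) k l <= \sum_(l | Q l) k l)%N.
Proof.
move=> PQ; rewrite [X in (X <= _)%N]big_mkcond [X in (_ <= X)%N]big_mkcond.
apply: leq_sum => l _; case: ifP => // /PQ ->; by [].
Qed.

Lemma sum_lei (i : 'I_r) : (\sum_(l : 'I_r | (l <= i)%N) k l = off i + k i)%N.
Proof.
rewrite (bigD1 i) //= addnC; congr (_ + _); apply: eq_bigl => l.
by rewrite ltn_neqAle andbC.
Qed.

Lemma off_mono (i j : 'I_r) : (i < j)%N -> (off i + k i <= off j)%N.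
Proof. move=> ij; rewrite -sum_lei; apply: sub_sum => l /leq_ltn_trans; exact. Qed.

Lemma off_le (i : 'I_r) : (off i + k i <= \sum_l k l)%N.
Proof. rewrite -sum_lei; exact: sub_sum. Qed.

Lemma off_disj (i j : 'I_r) t : (off i <= t < off i + k i)%N -> (off j <= t < off j + k j)%N -> i = j.
Proof.
move=> /andP [h1 h2] /andP [h3 h4].
have [ij|ji|/val_inj//] := ltngtP i j.
  by have := off_mono ij; move: h2 h3; lia.
by have := off_mono ji; move: h1 h4; lia.
Qed.
End Blocks.

Local Close Scope classical_set_scope.

Theorem corollary4 (R : realType) (S : finType) (r : nat)
  (G : 'I_r -> rel S) (x : 'I_r -> R) :
  (0 < #|S|)%N ->
  (forall i, simple_graph (G i)) ->
  (forall i, 0 <= x i <= 1) ->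
  \sum_(i < r) x i = 1 ->
  feasible_rate G (fun i => x i * log2 (shannon_capacity R (G i))).
Proof.
move=> hS hG hx hsum.
have [s0 _] := card_gt0P hS.
pose b i n : R := ln ((alpha_pow (G i) n)%:R).
have hb0 i n : 0 <= b i n by apply: ln_ge0; rewrite ler1n alpha_gt0.
have hbs i m n : b i m + b i n <= b i (m + n)%N.
  rewrite /b -lnM ?posrE ?ltr0n ?alpha_gt0 // -natrM.
  by rewrite ler_ln ?posrE ?ltr0n ?muln_gt0 ?alpha_gt0 // ler_nat alpha_super.
have hbM i n : b i n <= n%:R * ln (#|S|%:R : R).
  rewrite /b mulr_natl -lnXn ?ltr0n // -natrX.
  by rewrite ler_ln ?posrE ?ltr0n ?expn_gt0 ?hS ?alpha_gt0 // ler_nat alpha_le.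
have trn (n : nat) : Num.truncn (1 * n%:R : R) = n.
  by apply: truncn_def; rewrite mul1r lexx /= ltr_nat.
have hc i : shannon_capacity R (G i) = expR (fekL (b i)).
  rewrite /shannon_capacity; apply: cvg_lim; first exact: Rhausdorff.
  have -> : (fun n : nat => powR (alpha_pow (G i) n)%:R n%:R^-1) =
            (fun n => expR (b i (Num.truncn (1 * n%:R : R)) / n%:R)).
    by apply: funext => n; rewrite trn /powR pnatr_eq0 gtn_eqF ?alpha_gt0 // mulrC.
  apply: (@continuous_cvg _ _ _ _ _ (fun n : nat => b i (Num.truncn (1 * n%:R : R)) / n%:R) expR (fekL (b i))); first exact: continuous_expR.
  rewrite -[fekL _]mul1r; apply: conv_trunc => //.
  - exact: fek_ub (hbM i).
  - exact: fek_L0 (hb0 i) (hbM i).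
  - exact: fek_lb (hb0 i) (hbs i) (hbM i).
  - by rewrite ler01 lexx.
exists (fun n i => alpha_pow (G i) (Num.truncn (x i * n%:R))); split; last first.
  move=> i; rewrite hc /log2 expRK.
  have -> : (fun n : nat => ln (alpha_pow (G i) (Num.truncn (x i * n%:R)))%:R / ln 2 / n%:R) =
     (fun n => b i (Num.truncn (x i * n%:R)) / n%:R * (ln 2)^-1).
    by apply: funext => n; rewrite mulrAC.
  rewrite mulrA; apply: cvgMl; apply: conv_trunc => //.
  - exact: fek_ub (hbM i).
  - exact: fek_L0 (hb0 i) (hbM i).
  - exact: fek_lb (hb0 i) (hbs i) (hbM i).
move=> n.
set k := fun i => Num.truncn (x i * n%:R).
split; first by move=> i; apply: alpha_gt0.
have hk : (\sum_j k j <= n)%N.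
  rewrite -(ler_nat R) natr_sum.
  apply: (@le_trans _ _ (\sum_j x j * n%:R)).
    apply: ler_sum => j _; rewrite truncn_le mulr_ge0 //.
    by case/andP: (hx j).
  by rewrite -mulr_suml hsum mul1r.
pose W i (j : nat) : word S (k i) := nth [ffun=> s0] (enum (maxA (G i) (k i))) j.
exists (fun a => [ffun t : 'I_n =>
  if [pick i | (off k i <= t < off k i + k i)%N] is Some i
  then wf s0 (W i (a i)) (t - off k i) else s0]).
move=> i a a' ha.
have [maxI maxC] := maxAP (G i) (k i).
have hsz : size (enum (maxA (G i) (k i))) = alpha_pow (G i) (k i) by rewrite -cardE.
have hw : W i (a i) \in maxA (G i) (k i) by rewrite -mem_enum mem_nth // hsz.
have hw' : W i (a' i) \in maxA (G i) (k i) by rewrite -mem_enum mem_nth // hsz.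
have hne : W i (a i) != W i (a' i) by rewrite /W nth_uniq ?hsz ?enum_uniq.
have := notadjP hne (forall_inP (forall_inP maxI _ hw) _ hw').
move=> /existsP [u /andP [h1 h2]].
have hu : (off k i + u < n)%N.
  apply: leq_trans hk; apply: leq_trans (off_le k i); by rewrite ltn_add2l.
apply/existsP; exists (Ordinal hu).
have hp : [pick j | (off k j <= off k i + u < off k j + k j)%N] = Some i.
  case: pickP => [j hj|h].
    congr Some; apply: (off_disj hj); by rewrite leq_addr ltn_add2l ltn_ord.
  by have := h i; rewrite leq_addr ltn_add2l ltn_ord.
by rewrite !ffunE /= hp addKn !wfE h1 h2.
Qed.
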